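(* Fix one of the two variants $\sharp\in\{\text{lumped},\text{exact}\}$ described in the context. Let $T>0$, and let $\vec X^h\in C^1([0,T];\underline V^h)$ with $\vec X^h(t)\in\underline V^h_{\partial_0}$, $|\vec X^h_\rho(t)|>0$ a.e., and $\vec X^h(\rho,t)\cdot\vec e_1>0$ for $\rho\in\overline I\setminus\partial_0I$, $t\in[0,T]$; assume $\vec X^h_t(t)\in\underline V^h_\partial$ for all $t\in(0,T]$. (i) If $\kappa^h(t)\in W_\sharp$ and for all $t\in(0,T]$ $$\big((\vec X^h\cdot\vec e_1)\vec X^h_t,\chi\,\vec\nu^h|\vec X^h_\rho|\big)_\sharp=\big(\vec X^h\cdot\vec e_1\,\kappa^h,\chi|\vec X^h_\rho|\big)_\sharp\ \ \forall\chi\in W_\sharp,$$ $$\big(\vec X^h\cdot\vec e_1\,\kappa^h\vec\nu^h,\vec\eta|\vec X^h_\rho|\big)_\sharp+\big(\vec\eta\cdot\vec e_1,|\vec X^h_\rho|\big)+\big((\vec X^h\cdot\vec e_1)\vec X^h_\rho,\vec\eta_\rho|\vec X^h_\rho|^{-1}\big)=-\sum_{i=1}^2\sum_{p\in\partial_iI}\widehat\varrho^{(p)}(\vec X^h(p,t)\cdot\vec e_1)\vec\eta(p)\cdot\vec e_{3-i}\ \ \forall\vec\eta\in\underline V^h_\partial,$$ then $-\frac1{2\pi}\frac{d}{dt}E(\vec X^h(t))=\big(\vec X^h\cdot\vec e_1\,|\kappa^h|^2,|\vec X^h_\rho|\big)_\sharp\ge0$. (ii) If $\vec\kappa^h(t)\in[W_\sharp]^2$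 and for all $t\in(0,T]$ the same two equations hold with $\kappa^h\vec\nu^h$ replaced by $\vec\kappa^h$ in the second, and the first replaced by $\big((\vec X^h\cdot\vec e_1)\vec X^h_t,\vec\chi|\vec X^h_\rho|\big)_\sharp=\big((\vec X^h\cdot\vec e_1)\vec\kappa^h,\vec\chi|\vec X^h_\rho|\big)_\sharp$ for all $\vec\chi\in[W_\sharp]^2$, then $-\frac1{2\pi}\frac{d}{dt}E(\vec X^h(t))=\big(\vec X^h\cdot\vec e_1\,|\vec\kappa^h|^2,|\vec X^h_\rho|\big)_\sharp\ge0$.
   Context: Setup. $\vec e_1=(1,0)^T$, $\vec e_2=(0,1)^T$; ''$\cdot$'' is the Euclidean inner product. $I$ is either the periodic interval $\mathbb R/\mathbb Z$ (with $\partial I=\emptyset$) or $I=(0,1)$ (with $\partial I=\{0,1\}$). $\partial I=\partial_DI\cup\partial_0I\cup\partial_1I\cup\partial_2I$ is a given disjoint partition, and $\widehat\varrho^{(p)}\in\mathbb R$, $p\in\{0,1\}$, are given constants. Let $J\ge3$, $h=1/J$, $q_j=jh$ ($j=0,\dots,J$; $q_0=q_J$ identified in the periodic case). $V^h$ is the space of continuous functions on $\overline I$ (periodic if $I=\mathbb R/\mathbb Z$) that are affine on each $[q_{j-1},q_j]$; $\underline V^h=[V^h]^2$; $\underline V^h_{\partial_0}=\{\vec\eta\in\underline V^h:\vec\eta(\rho)\cdot\vec e_1=0\ \forall\rho\in\partial_0I\}$; $\underline V^h_\partial=\{\vec\eta\in\underline V^h_{\partial_0}:\vec\eta(\rho)\cdot\vec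 e_i=0\ \forall\rho\in\partial_iI,\ i=1,2;\ \vec\eta(\rho)=\vec0\ \forall\rho\in\partial_DI\}$; $W^h_{\partial_0}=\{\chi\in V^h:\chi(\rho)=0\ \forall\rho\in\partial_0I\}$. $(\cdot,\cdot)$ is the $L^2(I)$ inner product, and for piecewise continuous $f,g$ the mass-lumped product is $(f,g)^h=\tfrac h2\sum_{j=1}^J[(fg)(q_j^-)+(fg)(q_{j-1}^+)]$. Two variants: ''lumped'': $(\cdot,\cdot)_\sharp=(\cdot,\cdot)^h$, $W_\sharp=W^h_{\partial_0}$; ''exact'': $(\cdot,\cdot)_\sharp=(\cdot,\cdot)$, $W_\sharp=V^h$. $\vec\nu^h=-[\vec X^h_\rho]^\perp/|\vec X^h_\rho|$ with $(a,b)^\perp=(b,-a)$. The discrete energy of $\vec X\in\underline V^h$ is $E(\vec X)=2\pi(\vec X\cdot\vec e_1,|\vec X_\rho|)+2\pi\sum_{p\in\partial_1I}\widehat\varrho^{(p)}(\vec X(p)\cdot\vec e_1)(\vec X(p)\cdot\vec e_2)+\pi\sum_{p\in\partial_2I}\widehat\varrho^{(p)}(\vec X(p)\cdot\vec e_1)^2$. *)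

(* Defs.v *)
From Stdlib Require Import Reals Lra Lia.
Open Scope R_scope.

Inductive variant := lumped | exact.

(* Classes of the disjoint partition of the boundary:
   PD = \partial_D I, P0 = \partial_0 I, P1 = \partial_1 I, P2 = \partial_2 I. *)
Inductive BC := PD | P0 | P1 | P2.

Definition BC_eqb (a b : BC) : bool :=
  match a, b with
  | PD, PD | P0, P0 | P1, P1 | P2, P2 => true
  | _, _ => false
  end.

Definition hh (J : nat) : R := / INR J.
Definition q (J j : nat) : R := INR j * hh J.

(* A function of V^h is represented by its nodal values v j = v(q_j), j = 0..J
   (values at j > J are irrelevant).  In the periodic case (per = true)
   q_J is identified with q_0, i.e. v J = v 0.
   Boundary: when per = false, the point rho = 0 is node 0 and rho = 1 is
   node J; b0, b1 give the class of the points 0 and 1 in the partition of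
   \partial I.  When per = true, \partial I is empty. *)
Definition nodefun := nat -> R.

Definition inPart (per : bool) (J : nat) (b0 b1 c : BC) (j : nat) : Prop :=
  per = false /\ ((j = 0%nat /\ b0 = c) \/ (j = J /\ b1 = c)).

Definition inBd0 (per : bool) (b0 b1 : BC) (rho : R) : Prop :=
  per = false /\ ((rho = 0 /\ b0 = P0) \/ (rho = 1 /\ b1 = P0)).

Definition inV (per : bool) (J : nat) (v : nodefun) : Prop :=
  per = true -> v J = v 0%nat.

Definition inV0 (per : bool) (J : nat) (b0 b1 : BC) (v1 v2 : nodefun) : Prop :=
  inV per J v1 /\ inV per J v2 /\
  (forall j, inPart per J b0 b1 P0 j -> v1 j = 0).

Definition inVD (per : bool) (J : nat) (b0 b1 : BC) (v1 v2 : nodefun) : Prop :=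
  inV0 per J b0 b1 v1 v2 /\
  (forall j, inPart per J b0 b1 P1 j -> v1 j = 0) /\
  (forall j, inPart per J b0 b1 P2 j -> v2 j = 0) /\
  (forall j, inPart per J b0 b1 PD j -> v1 j = 0 /\ v2 j = 0).

Definition inW0 (per : bool) (J : nat) (b0 b1 : BC) (v : nodefun) : Prop :=
  inV per J v /\ (forall j, inPart per J b0 b1 P0 j -> v j = 0).

Definition inWs (var : variant) (per : bool) (J : nat) (b0 b1 : BC)
  (v : nodefun) : Prop :=
  match var with
  | lumped => inW0 per J b0 b1 v
  | exact => inV per J v
  end.

(* Element-wise quantities on element [q_{j-1}, q_j], j = 1..J:
   the derivative v_rho (constant on the element), |X_rho|, and
   nu = -[X_rho]^perp / |X_rho| with (a,b)^perp = (b,-a), i.e.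
   nu = (-X2_rho, X1_rho)/|X_rho|. *)
Definition drho (J : nat) (v : nodefun) (j : nat) : R :=
  (v j - v (pred j)) / hh J.
Definition len (J : nat) (x1 x2 : nodefun) (j : nat) : R :=
  sqrt (drho J x1 j ^ 2 + drho J x2 j ^ 2).
Definition nu1 (J : nat) (x1 x2 : nodefun) (j : nat) : R :=
  - drho J x2 j / len J x1 x2 j.
Definition nu2 (J : nat) (x1 x2 : nodefun) (j : nat) : R :=
  drho J x1 j / len J x1 x2 j.

(* Integral over one element (divided by h) of f*g*k, with f, g, k affine
   on the element having endpoint values (a0,a1), (b0,b1), (c0,c1):
   - lumped: the element part of (.,.)^h, i.e. (1/2)[(fgk)(q_{j-1}^+) + (fgk)(q_j^-)];
   - exact:  int_0^1 (a0(1-s)+a1 s)(b0(1-s)+b1 s)(c0(1-s)+c1 s) ds, computed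
     exactly with int (1-s)^3 = int s^3 = 1/4, int (1-s)^2 s = int (1-s) s^2 = 1/12. *)
Definition elem (var : variant) (a0 a1 b0 b1 c0 c1 : R) : R :=
  match var with
  | lumped => (a0 * b0 * c0 + a1 * b1 * c1) / 2
  | exact =>
      (a0 * b0 * c0 + a1 * b1 * c1) / 4
      + (a0 * b0 * c1 + a0 * b1 * c0 + a1 * b0 * c0
         + a0 * b1 * c1 + a1 * b0 * c1 + a1 * b1 * c0) / 12
  end.

Fixpoint sum1 (n : nat) (F : nat -> R) : R :=
  match n with
  | O => 0
  | S m => sum1 m F + F (S m)
  end.

(* ip3 var J f g k c = (f g k c, 1)_sharp, where f, g, k in V^h (nodal values)
   and c is piecewise constant (value c j on element j).  For var = exact this
   is the L^2(I) integral, for var = lumped the mass-lumped product. *)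
Definition ip3 (var : variant) (J : nat) (f g k c : nat -> R) : R :=
  sum1 J (fun j => hh J * c j *
    elem var (f (pred j)) (f j) (g (pred j)) (g j) (k (pred j)) (k j)).

Definition one : nodefun := fun _ => 1.

(* sum over p in \partial_c I of G (rhohat^(p)) (node of p) *)
Definition bsum (per : bool) (J : nat) (b0 b1 : BC) (r0 r1 : R) (c : BC)
  (G : R -> nat -> R) : R :=
  if per then 0
  else (if BC_eqb b0 c then G r0 0%nat else 0)
     + (if BC_eqb b1 c then G r1 J else 0).

Definition energy (per : bool) (J : nat) (b0 b1 : BC) (r0 r1 : R)
  (x1 x2 : nodefun) : R :=
  2 * PI * ip3 exact J x1 one one (len J x1 x2)
  + 2 * PI * bsum per J b0 b1 r0 r1 P1 (fun r j => r * x1 j * x2 j)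
  + PI * bsum per J b0 b1 r0 r1 P2 (fun r j => r * x1 j ^ 2).

Definition derive_within (a b : R) (f : R -> R) (t l : R) : Prop :=
  forall eps, 0 < eps -> exists delta, 0 < delta /\
    forall s, a <= s <= b -> s <> t -> Rabs (s - t) < delta ->
      Rabs ((f s - f t) / (s - t) - l) < eps.

Definition cont_within (a b : R) (f : R -> R) (t : R) : Prop :=
  forall eps, 0 < eps -> exists delta, 0 < delta /\
    forall s, a <= s <= b -> Rabs (s - t) < delta -> Rabs (f s - f t) < eps.

(* Main.v *)
Require Import Defs.
From Stdlib Require Import Reals Lra Lia Psatz Classical.
Open Scope R_scope.

Definition D (a b : R) (f : R -> R) (t l : R) : Prop :=
  forall eps, 0 < eps -> exists delta, 0 < delta /\
    forall s, a <= s <= b -> Rabs (s - t) < delta ->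
      Rabs (f s - f t - l * (s - t)) <= eps * Rabs (s - t).

Lemma D_of_dw a b f t l : derive_within a b f t l -> D a b f t l.
Proof.
  intros H eps Heps. destruct (H eps Heps) as [d [Hd Hs]]. exists d; split; auto.
  intros s Hs1 Hs2. destruct (Req_dec s t) as [->|Hne].
  - replace (f t - f t - l*(t-t)) with 0 by ring. rewrite Rminus_diag, Rabs_R0. lra.
  - specialize (Hs s Hs1 Hne Hs2).
    replace (f s - f t - l*(s-t)) with (((f s - f t)/(s-t) - l) * (s-t))
      by (field; intro; apply Hne; lra).
    rewrite Rabs_mult. apply Rmult_le_compat_r; [apply Rabs_pos| lra].
Qed.

Lemma dw_of_D a b f t l : D a b f t l -> derive_within a b f t l.
Proof.
  intros H eps Heps. destruct (H (eps/2) ltac:(lra)) as [d [Hd Hs]].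
  exists d. split; auto. intros s Hab Hne Hlt. specialize (Hs s Hab Hlt).
  assert (Hh : s - t <> 0) by (intro; apply Hne; lra).
  assert (Hp : 0 < Rabs (s - t)) by (apply Rabs_pos_lt; auto).
  replace ((f s - f t)/(s-t) - l) with ((f s - f t - l*(s-t)) * / (s-t)) by (field; auto).
  rewrite Rabs_mult, Rabs_inv.
  apply Rmult_lt_reg_r with (Rabs (s - t)); auto.
  rewrite Rmult_assoc, Rinv_l by (apply Rgt_not_eq; lra). nra.
Qed.

Lemma D_bound a b f t l : D a b f t l -> exists d, 0 < d /\
  forall s, a <= s <= b -> Rabs (s - t) < d -> Rabs (f s - f t) <= (Rabs l + 1) * Rabs (s - t).
Proof.
  intros H. destruct (H 1 ltac:(lra)) as [d [Hd Hs]]. exists d; split; auto.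
  intros s Hab Hlt. specialize (Hs s Hab Hlt).
  replace (f s - f t) with ((f s - f t - l * (s - t)) + l * (s - t)) by ring.
  eapply Rle_trans; [apply Rabs_triang|]. rewrite Rabs_mult. lra.
Qed.

Lemma D_eql a b f t l l' : D a b f t l -> l = l' -> D a b f t l'.
Proof. intros H ->; auto. Qed.

Lemma D_ext a b f g t l : (forall s, f s = g s) -> D a b g t l -> D a b f t l.
Proof. intros E H eps Heps. destruct (H eps Heps) as [d [Hd Hs]]. exists d; split; auto.
  intros s H1 H2. rewrite !E. auto. Qed.

Lemma D_const a b c t : D a b (fun _ => c) t 0.
Proof. intros eps Heps. exists 1; split; [lra|]. intros s _ _.
  replace (c - c - 0 * (s - t)) with 0 by ring. rewrite Rabs_R0.
  apply Rmult_le_pos; [lra|apply Rabs_pos]. Qed.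

Lemma D_plus a b f g t lf lg l : D a b f t lf -> D a b g t lg -> l = lf + lg ->
  D a b (fun s => f s + g s) t l.
Proof.
  intros Hf Hg -> eps Heps.
  destruct (Hf (eps/2) ltac:(lra)) as [d1 [Hd1 H1]].
  destruct (Hg (eps/2) ltac:(lra)) as [d2 [Hd2 H2]].
  exists (Rmin d1 d2). split; [apply Rmin_pos; auto|].
  intros s Hab Hlt. specialize (H1 s Hab ltac:(pose proof (Rmin_l d1 d2); lra)).
  specialize (H2 s Hab ltac:(pose proof (Rmin_r d1 d2); lra)).
  replace (f s + g s - (f t + g t) - (lf + lg) * (s - t)) with
    ((f s - f t - lf * (s - t)) + (g s - g t - lg * (s - t))) by ring.
  eapply Rle_trans; [apply Rabs_triang|]. lra.
Qed.

Lemma D_minus a b f g t lf lg l : D a b f t lf -> D a b g t lg -> l = lf - lg ->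
  D a b (fun s => f s - g s) t l.
Proof.
  intros Hf Hg -> eps Heps.
  destruct (Hf (eps/2) ltac:(lra)) as [d1 [Hd1 H1]].
  destruct (Hg (eps/2) ltac:(lra)) as [d2 [Hd2 H2]].
  exists (Rmin d1 d2). split; [apply Rmin_pos; auto|].
  intros s Hab Hlt. specialize (H1 s Hab ltac:(pose proof (Rmin_l d1 d2); lra)).
  specialize (H2 s Hab ltac:(pose proof (Rmin_r d1 d2); lra)).
  replace (f s - g s - (f t - g t) - (lf - lg) * (s - t)) with
    ((f s - f t - lf * (s - t)) + - (g s - g t - lg * (s - t))) by ring.
  eapply Rle_trans; [apply Rabs_triang|]. rewrite Rabs_Ropp. lra.
Qed.

Lemma abs_prod_le x y h e E : Rabs x <= e * Rabs h -> e * Rabs y <= E ->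
  Rabs (x * y) <= E * Rabs h.
Proof. intros H1 H2. rewrite Rabs_mult. pose proof (Rabs_pos y). pose proof (Rabs_pos h).
  pose proof (Rabs_pos x). nra. Qed.

Lemma D_mult a b f g t lf lg l : D a b f t lf -> D a b g t lg ->
  l = lf * g t + f t * lg -> D a b (fun s => f s * g s) t l.
Proof.
  intros Hf Hg -> eps Heps.
  destruct (D_bound _ _ _ _ _ Hf) as [df [Hdf Bf]].
  destruct (D_bound _ _ _ _ _ Hg) as [dg [Hdg Bg]].
  set (Cf := Rabs lf + 1). set (Cg := Rabs lg + 1).
  assert (HCf : 0 < Cf) by (unfold Cf; pose proof (Rabs_pos lf); lra).
  assert (HCg : 0 < Cg) by (unfold Cg; pose proof (Rabs_pos lg); lra).
  pose proof (Rabs_pos (g t)). pose proof (Rabs_pos (f t)).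
  set (e1 := eps / (3 * (Rabs (g t) + 1))).
  set (e2 := eps / (3 * (Rabs (f t) + 1))).
  assert (He1 : 0 < e1) by (unfold e1; apply Rdiv_lt_0_compat; lra).
  assert (He2 : 0 < e2) by (unfold e2; apply Rdiv_lt_0_compat; lra).
  destruct (Hf e1 He1) as [d1 [Hd1 H1]].
  destruct (Hg e2 He2) as [d2 [Hd2 H2]].
  set (d3 := eps / (3 * Cf * Cg)).
  assert (Hd3 : 0 < d3) by (unfold d3; apply Rdiv_lt_0_compat; nra).
  exists (Rmin (Rmin df dg) (Rmin (Rmin d1 d2) d3)).
  split. { repeat apply Rmin_pos; auto. }
  intros s Hab Hlt.
  pose proof (Rmin_l (Rmin df dg) (Rmin (Rmin d1 d2) d3)).
  pose proof (Rmin_r (Rmin df dg) (Rmin (Rmin d1 d2) d3)).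
  pose proof (Rmin_l df dg). pose proof (Rmin_r df dg).
  pose proof (Rmin_l (Rmin d1 d2) d3). pose proof (Rmin_r (Rmin d1 d2) d3).
  pose proof (Rmin_l d1 d2). pose proof (Rmin_r d1 d2).
  specialize (Bf s Hab ltac:(lra)). specialize (Bg s Hab ltac:(lra)).
  specialize (H1 s Hab ltac:(lra)). specialize (H2 s Hab ltac:(lra)).
  assert (Hs3 : Rabs (s - t) < d3) by lra.
  replace (f s * g s - f t * g t - (lf * g t + f t * lg) * (s - t)) with
    ((f s - f t - lf * (s - t)) * g t + ((g s - g t - lg * (s - t)) * f t
      + (f s - f t) * (g s - g t))) by ring.
  assert (T1 : Rabs ((f s - f t - lf * (s - t)) * g t) <= eps/3 * Rabs (s - t)).
  { apply abs_prod_le with e1; auto. unfold e1.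
    apply Rmult_le_reg_r with (3 * (Rabs (g t) + 1)); [lra|].
    field_simplify; [|lra]. nra. }
  assert (T2 : Rabs ((g s - g t - lg * (s - t)) * f t) <= eps/3 * Rabs (s - t)).
  { apply abs_prod_le with e2; auto. unfold e2.
    apply Rmult_le_reg_r with (3 * (Rabs (f t) + 1)); [lra|].
    field_simplify; [|lra]. nra. }
  assert (T3 : Rabs ((f s - f t) * (g s - g t)) <= eps/3 * Rabs (s - t)).
  { apply abs_prod_le with Cf; auto.
    assert (Cf * Cg * d3 = eps / 3) by (unfold d3; field; lra).
    pose proof (Rabs_pos (s - t)).
    assert (Rabs (g s - g t) <= Cg * d3).
    { eapply Rle_trans; [apply Bg|]. apply Rmult_le_compat_l; lra. }
    assert (Cf * Rabs (g s - g t) <= Cf * (Cg * d3)) by (apply Rmult_le_compat_l; lra).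
    lra. }
  eapply Rle_trans; [apply Rabs_triang|].
  eapply Rle_trans; [apply Rplus_le_compat_l; apply Rabs_triang|]. lra.
Qed.

Lemma lim_to_o F y0 F' : derivable_pt_lim F y0 F' -> forall eps, 0 < eps ->
  exists d, 0 < d /\ forall y, Rabs (y - y0) < d ->
    Rabs (F y - F y0 - F' * (y - y0)) <= eps * Rabs (y - y0).
Proof.
  intros H eps Heps. destruct (H eps Heps) as [[d Hd] Hs]. exists d; split; auto.
  intros y Hy. simpl in Hs. destruct (Req_dec y y0) as [->|Hne].
  - replace (F y0 - F y0 - F' * (y0 - y0)) with 0 by ring. rewrite Rminus_diag, Rabs_R0. lra.
  - assert (Hh : y - y0 <> 0) by lra.
    specialize (Hs (y - y0) Hh Hy). replace (y0 + (y - y0)) with y in Hs by ring.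
    replace (F y - F y0 - F' * (y - y0)) with (((F y - F y0)/(y - y0) - F') * (y - y0))
      by (field; auto).
    rewrite Rabs_mult. apply Rmult_le_compat_r; [apply Rabs_pos| lra].
Qed.

Lemma D_comp a b F F' g t l L : derivable_pt_lim F (g t) F' -> D a b g t l ->
  L = F' * l -> D a b (fun s => F (g s)) t L.
Proof.
  intros HF Hg -> eps Heps.
  destruct (D_bound _ _ _ _ _ Hg) as [dg [Hdg Bg]].
  set (Cg := Rabs l + 1).
  assert (HCg : 0 < Cg) by (unfold Cg; pose proof (Rabs_pos l); lra).
  pose proof (Rabs_pos F').
  destruct (lim_to_o F (g t) F' HF (eps / (2 * Cg)) ltac:(apply Rdiv_lt_0_compat; lra))
    as [dF [HdF HFs]].
  set (e2 := eps / (2 * (Rabs F' + 1))).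
  assert (He2 : 0 < e2) by (unfold e2; apply Rdiv_lt_0_compat; lra).
  destruct (Hg e2 He2) as [d2 [Hd2 H2]].
  exists (Rmin dg (Rmin d2 (dF / Cg))). split.
  { apply Rmin_pos; auto. apply Rmin_pos; auto. apply Rdiv_lt_0_compat; lra. }
  intros s Hab Hlt.
  pose proof (Rmin_l dg (Rmin d2 (dF / Cg))). pose proof (Rmin_r dg (Rmin d2 (dF / Cg))).
  pose proof (Rmin_l d2 (dF / Cg)). pose proof (Rmin_r d2 (dF / Cg)).
  specialize (Bg s Hab ltac:(lra)). specialize (H2 s Hab ltac:(lra)).
  pose proof (Rabs_pos (s - t)).
  assert (Hgs : Rabs (g s - g t) < dF).
  { assert (Cg * (dF / Cg) = dF) by (field; lra).
    assert (Rabs (s - t) < dF / Cg) by lra. fold Cg in Bg. nra. }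
  specialize (HFs (g s) Hgs).
  replace (F (g s) - F (g t) - F' * l * (s - t)) with
    ((F (g s) - F (g t) - F' * (g s - g t)) + F' * (g s - g t - l * (s - t))) by ring.
  eapply Rle_trans; [apply Rabs_triang|].
  assert (T1 : Rabs (F (g s) - F (g t) - F' * (g s - g t)) <= eps / 2 * Rabs (s - t)).
  { eapply Rle_trans; [apply HFs|]. fold Cg in Bg.
    assert (eps / (2 * Cg) * Cg = eps / 2) by (field; lra).
    assert (0 <= eps / (2 * Cg)) by (apply Rlt_le, Rdiv_lt_0_compat; lra). nra. }
  assert (T2 : Rabs (F' * (g s - g t - l * (s - t))) <= eps / 2 * Rabs (s - t)).
  { rewrite Rmult_comm. apply abs_prod_le with e2; auto. unfold e2.
    apply Rmult_le_reg_r with (2 * (Rabs F' + 1)); [lra|].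
    field_simplify; [|lra]. nra. }
  lra.
Qed.


Lemma D_sum1 a b n (F : R -> nat -> R) F' t :
  (forall j, (1 <= j <= n)%nat -> D a b (fun s => F s j) t (F' j)) ->
  D a b (fun s => sum1 n (F s)) t (sum1 n F').
Proof.
  induction n as [|n IH]; intros H; simpl.
  - apply D_const.
  - eapply D_plus; [apply IH; intros j Hj; apply H; lia| apply H; lia| reflexivity].
Qed.

Lemma sum1_ext n f g : (forall j, (1 <= j <= n)%nat -> f j = g j) -> sum1 n f = sum1 n g.
Proof. induction n; intros H; simpl; auto. rewrite IHn by (intros; apply H; lia).
  rewrite H by lia. auto. Qed.

Lemma sum1_plus n f g : sum1 n (fun j => f j + g j) = sum1 n f + sum1 n g.
Proof. induction n; simpl; [ring|]. rewrite IHn. ring. Qed.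

Lemma sum1_nonneg n f : (forall j, (1 <= j <= n)%nat -> 0 <= f j) -> 0 <= sum1 n f.
Proof. induction n; intros H; simpl; [lra|].
  pose proof (H (S n) ltac:(lia)). assert (0 <= sum1 n f) by (apply IHn; intros; apply H; lia).
  lra. Qed.

Lemma elem_sym var a0 a1 b0 b1 c0 c1 : elem var a0 a1 b0 b1 c0 c1 = elem var a0 a1 c0 c1 b0 b1.
Proof. destruct var; simpl; field. Qed.

Lemma ip3_sym var J f g k c : ip3 var J f g k c = ip3 var J f k g c.
Proof. unfold ip3. apply sum1_ext. intros. rewrite elem_sym. auto. Qed.

Lemma elem_nonneg var a0 a1 b0 b1 : 0 <= a0 -> 0 <= a1 -> 0 <= elem var a0 a1 b0 b1 b0 b1.
Proof. intros H0 H1. destruct var; simpl.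
  - assert (0 <= a0 * b0 * b0) by (rewrite Rmult_assoc; apply Rmult_le_pos; nra).
    assert (0 <= a1 * b1 * b1) by (rewrite Rmult_assoc; apply Rmult_le_pos; nra). lra.
  - assert (0 <= 3*b0*b0 + 2*b0*b1 + b1*b1) by nra.
    assert (0 <= 3*b1*b1 + 2*b0*b1 + b0*b0) by nra.
    assert (0 <= a0 * (3*b0*b0 + 2*b0*b1 + b1*b1)) by (apply Rmult_le_pos; lra).
    assert (0 <= a1 * (3*b1*b1 + 2*b0*b1 + b0*b0)) by (apply Rmult_le_pos; lra).
    nra.
Qed.

Lemma hh_pos J : (3 <= J)%nat -> 0 < hh J.
Proof. intros. unfold hh. apply Rinv_0_lt_compat, lt_0_INR. lia. Qed.

Lemma ip3_nonneg var J f g c : (3 <= J)%nat -> (forall j, (j <= J)%nat -> 0 <= f j) ->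
  (forall j, (1 <= j <= J)%nat -> 0 < c j) -> 0 <= ip3 var J f g g c.
Proof.
  intros HJ Hf Hc. unfold ip3. apply sum1_nonneg. intros j Hj.
  pose proof (hh_pos J HJ). pose proof (Hc j Hj).
  apply Rmult_le_pos; [apply Rmult_le_pos; lra|]. apply elem_nonneg; apply Hf; lia.
Qed.

Lemma BC_eqb_eq a b : BC_eqb a b = true -> a = b.
Proof. destruct a, b; simpl; congruence. Qed.

Lemma D_bsum a b per J b0 b1 r0 r1 c (G : R -> R -> nat -> R) G' t :
  (forall r j, inPart per J b0 b1 c j -> D a b (fun s => G s r j) t (G' r j)) ->
  D a b (fun s => bsum per J b0 b1 r0 r1 c (G s)) t (bsum per J b0 b1 r0 r1 c G').
Proof.
  intros H. unfold bsum. destruct per; [apply D_const|].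
  eapply D_plus; [| |reflexivity].
  - destruct (BC_eqb b0 c) eqn:E; [|apply D_const]. apply H.
    apply BC_eqb_eq in E. unfold inPart. auto.
  - destruct (BC_eqb b1 c) eqn:E; [|apply D_const]. apply H.
    apply BC_eqb_eq in E. unfold inPart. auto.
Qed.

Lemma bsum_ext per J b0 b1 r0 r1 c G G' :
  (forall r j, inPart per J b0 b1 c j -> G r j = G' r j) ->
  bsum per J b0 b1 r0 r1 c G = bsum per J b0 b1 r0 r1 c G'.
Proof.
  intros H. unfold bsum. destruct per; auto.
  destruct (BC_eqb b0 c) eqn:E; destruct (BC_eqb b1 c) eqn:E'; try apply BC_eqb_eq in E;
   try apply BC_eqb_eq in E'; rewrite ?H; unfold inPart; auto.
Qed.

Lemma bsum_scale per J b0 b1 r0 r1 c G k :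
  bsum per J b0 b1 r0 r1 c (fun r j => k * G r j) = k * bsum per J b0 b1 r0 r1 c G.
Proof. unfold bsum. destruct per; [ring|].
  destruct (BC_eqb b0 c); destruct (BC_eqb b1 c); ring. Qed.

Lemma D_drho a b J (f : R -> nodefun) f' t j :
  D a b (fun s => f s j) t (f' j) -> D a b (fun s => f s (pred j)) t (f' (pred j)) ->
  D a b (fun s => drho J (f s) j) t (drho J f' j).
Proof.
  intros H1 H2. unfold drho, Rdiv.
  eapply D_mult; [eapply D_minus; [apply H1|apply H2|reflexivity]|apply D_const|ring].
Qed.

Lemma D_len a b J (x1 x2 : R -> nodefun) x1' x2' t j :
  D a b (fun s => x1 s j) t (x1' j) -> D a b (fun s => x1 s (pred j)) t (x1' (pred j)) ->
  D a b (fun s => x2 s j) t (x2' j) -> D a b (fun s => x2 s (pred j)) t (x2' (pred j)) ->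
  len J (x1 t) (x2 t) j > 0 ->
  D a b (fun s => len J (x1 s) (x2 s) j) t
    ((drho J (x1 t) j * drho J x1' j + drho J (x2 t) j * drho J x2' j) / len J (x1 t) (x2 t) j).
Proof.
  intros H1 H2 H3 H4 Hl. unfold len at 1.
  assert (Hu : 0 < drho J (x1 t) j ^ 2 + drho J (x2 t) j ^ 2).
  { destruct (Rle_lt_or_eq_dec 0 (drho J (x1 t) j ^ 2 + drho J (x2 t) j ^ 2)) as [h|h]; auto.
    nra. unfold len in Hl. rewrite <- h, sqrt_0 in Hl. lra. }
  eapply D_comp with (g := fun s => drho J (x1 s) j ^ 2 + drho J (x2 s) j ^ 2).
  - apply derivable_pt_lim_sqrt. exact Hu.
  - eapply D_plus; [| |reflexivity].
    + eapply D_ext; [intros s; simpl; rewrite Rmult_1_r; reflexivity|].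
      eapply D_mult; [apply D_drho; eauto|apply D_drho; eauto|reflexivity].
    + eapply D_ext; [intros s; simpl; rewrite Rmult_1_r; reflexivity|].
      eapply D_mult; [apply D_drho; eauto|apply D_drho; eauto|reflexivity].
  - unfold len in *. field. lra.
Qed.

Lemma inPart_le per J b0 b1 c j : inPart per J b0 b1 c j -> (j <= J)%nat.
Proof. unfold inPart. intros [_ [[-> _]|[-> _]]]; lia. Qed.

Lemma D_energy a b per J b0 b1 r0 r1 (x1 x2 : R -> nodefun) x1' x2' t :
 (forall j, (j<=J)%nat -> D a b (fun s => x1 s j) t (x1' j)) ->
 (forall j, (j<=J)%nat -> D a b (fun s => x2 s j) t (x2' j)) ->
 (forall j, (1<=j<=J)%nat -> len J (x1 t) (x2 t) j > 0) ->
 (forall j, inPart per J b0 b1 P1 j -> x1' j = 0) ->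
 D a b (fun s => energy per J b0 b1 r0 r1 (x1 s) (x2 s)) t
  (2*PI*( (ip3 exact J x1' one one (len J (x1 t) (x2 t))
        + (ip3 exact J (x1 t) one one
             (fun j => drho J (x1 t) j * drho J x1' j / len J (x1 t) (x2 t) j)
           + ip3 exact J (x1 t) one one
             (fun j => drho J (x2 t) j * drho J x2' j / len J (x1 t) (x2 t) j)))
        + (bsum per J b0 b1 r0 r1 P1 (fun r j => r * x1 t j * x2' j)
           + bsum per J b0 b1 r0 r1 P2 (fun r j => r * x1 t j * x1' j)))).
Proof.
  intros H1 H2 Hl H0. unfold energy.
  pose (L := fun j => len J (x1 t) (x2 t) j).
  pose (dL := fun j => (drho J (x1 t) j * drho J x1' j + drho J (x2 t) j * drho J x2' j)
                 / len J (x1 t) (x2 t) j).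
  eapply D_plus; [eapply D_plus; [ | |reflexivity] | |].
  - eapply D_mult; [apply D_const| |reflexivity]. unfold ip3.
    apply D_sum1 with (F := fun s j => hh J * len J (x1 s) (x2 s) j *
       elem exact (x1 s (pred j)) (x1 s j) (one (pred j)) (one j) (one (pred j)) (one j))
     (F' := fun j => hh J * (dL j * ((x1 t (pred j) + x1 t j) / 2)
                        + L j * ((x1' (pred j) + x1' j) / 2))).
    intros j Hj.
    eapply D_ext with (g := fun s => (hh J * len J (x1 s) (x2 s) j) *
        ((x1 s (pred j) + x1 s j) * / 2)).
    { intros s. unfold elem, one. field. }
    eapply D_mult.
    + eapply D_mult; [apply D_const| |reflexivity].
      apply D_len; try apply H1; try apply H2; try lia. apply Hl; lia.
    + eapply D_mult; [eapply D_plus; [apply H1; lia|apply H1; lia|reflexivity]|apply D_const|reflexivity].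
    + unfold dL, L. field. pose proof (Hl j Hj). lra.
  - eapply D_mult; [apply D_const| |reflexivity].
    apply D_bsum with (G := fun s r j => r * x1 s j * x2 s j)
      (G' := fun r j => r * x1 t j * x2' j).
    intros r j Hj. pose proof (inPart_le _ _ _ _ _ _ Hj).
    eapply D_mult; [eapply D_mult; [apply D_const|apply H1; auto|reflexivity]|apply H2; auto|].
    rewrite (H0 j Hj). ring.
  - eapply D_mult; [apply D_const| |reflexivity].
    apply D_bsum with (G := fun s r j => r * x1 s j ^ 2)
      (G' := fun r j => 2 * (r * x1 t j * x1' j)).
    intros r j Hj. pose proof (inPart_le _ _ _ _ _ _ Hj).
    eapply D_ext with (g := fun s => (r * x1 s j) * x1 s j); [intros; ring|].
    eapply D_mult; [eapply D_mult; [apply D_const|apply H1; auto|reflexivity]|apply H1; auto|].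
    ring.
  - rewrite bsum_scale.
    assert (E : sum1 J (fun j => hh J * (dL j * ((x1 t (pred j) + x1 t j) / 2)
                        + L j * ((x1' (pred j) + x1' j) / 2))) =
      ip3 exact J x1' one one (len J (x1 t) (x2 t))
        + (ip3 exact J (x1 t) one one
             (fun j => drho J (x1 t) j * drho J x1' j / len J (x1 t) (x2 t) j)
           + ip3 exact J (x1 t) one one
             (fun j => drho J (x2 t) j * drho J x2' j / len J (x1 t) (x2 t) j))).
    { unfold ip3. rewrite <- !sum1_plus. apply sum1_ext. intros j Hj.
      unfold elem, one, dL, L. field. pose proof (Hl j Hj). lra. }
    rewrite E. ring.
Qed.

Lemma X1_nonneg per J b0 b1 (x1 x2 : nodefun) : (3 <= J)%nat ->
  inV0 per J b0 b1 x1 x2 ->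
  (forall j rho, (1 <= j <= J)%nat ->
     q J (pred j) <= rho <= q J j -> ~ inBd0 per b0 b1 rho ->
     x1 (pred j) + (x1 j - x1 (pred j)) * (rho - q J (pred j)) / hh J > 0) ->
  forall j, (j <= J)%nat -> 0 <= x1 j.
Proof.
  intros HJ [_ [_ H0]] Hp j Hj.
  pose proof (hh_pos J HJ) as Hh.
  assert (HJp : 0 < INR J) by (apply lt_0_INR; lia).
  assert (Hq : forall k, q J (S k) - q J k = hh J).
  { intros k. unfold q. rewrite S_INR. ring. }
  destruct j as [|k].
  - assert (Hq0 : q J 0 = 0) by (unfold q; rewrite INR_0; ring).
    destruct (classic (inBd0 per b0 b1 0)) as [HB|HB].
    + destruct HB as [Hper [[_ Hb]|[Hc _]]]; [|lra].
      rewrite (H0 0%nat); [lra|]. unfold inPart. auto.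
    + specialize (Hp 1%nat 0 ltac:(lia)). simpl pred in Hp.
      specialize (Hq 0%nat). specialize (Hp ltac:(lra) HB).
      rewrite Hq0 in Hp. replace (0 - 0) with 0 in Hp by ring.
      replace (x1 0%nat + (x1 1%nat - x1 0%nat) * 0 / hh J) with (x1 0%nat) in Hp
        by (field; lra). lra.
  - destruct (classic (inBd0 per b0 b1 (q J (S k)))) as [HB|HB].
    + destruct HB as [Hper [[Hc _]|[Hc Hb]]].
      * exfalso. unfold q, hh in Hc. assert (0 < INR (S k)) by (apply lt_0_INR; lia).
        assert (0 < / INR J) by (apply Rinv_0_lt_compat; lra). nra.
      * assert (E : S k = J).
        { apply INR_eq. unfold q, hh in Hc. apply (Rmult_eq_compat_r (INR J)) in Hc.
          rewrite Rmult_assoc, Rinv_l in Hc by lra. lra. }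
        rewrite (H0 (S k)); [lra|]. unfold inPart. rewrite E. auto.
    + specialize (Hp (S k) (q J (S k)) ltac:(lia)). simpl pred in Hp.
      specialize (Hq k). specialize (Hp ltac:(lra) HB).
      rewrite Hq in Hp.
      replace (x1 k + (x1 (S k) - x1 k) * hh J / hh J) with (x1 (S k)) in Hp
        by (field; lra). lra.
Qed.
Theorem mainTheorem9
  (var : variant) (per : bool) (J : nat) (b0 b1 : BC) (r0 r1 T : R)
  (X1 X2 Xt1 Xt2 : R -> nodefun)
  (HJ : (3 <= J)%nat) (HT : 0 < T)
  (* X^h in C^1([0,T]; \underline V^h), with time derivative Xt *)
  (HC1 : forall j t, (j <= J)%nat -> 0 <= t <= T ->
     derive_within 0 T (fun s => X1 s j) t (Xt1 t j) /\
     derive_within 0 T (fun s => X2 s j) t (Xt2 t j) /\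
     cont_within 0 T (fun s => Xt1 s j) t /\
     cont_within 0 T (fun s => Xt2 s j) t)
  (HV0 : forall t, 0 <= t <= T -> inV0 per J b0 b1 (X1 t) (X2 t))
  (Hlen : forall t j, 0 <= t <= T -> (1 <= j <= J)%nat ->
     len J (X1 t) (X2 t) j > 0)
  (Hpos : forall t j rho, 0 <= t <= T -> (1 <= j <= J)%nat ->
     q J (pred j) <= rho <= q J j -> ~ inBd0 per b0 b1 rho ->
     X1 t (pred j) + (X1 t j - X1 t (pred j)) * (rho - q J (pred j)) / hh J > 0)
  (HXt : forall t, 0 < t <= T -> inVD per J b0 b1 (Xt1 t) (Xt2 t)) :
  (* (i) *)
  (forall kappa : R -> nodefun,
     (forall t, 0 < t <= T -> inWs var per J b0 b1 (kappa t)) ->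
     (forall t, 0 < t <= T -> forall chi, inWs var per J b0 b1 chi ->
        ip3 var J (X1 t) (Xt1 t) chi
            (fun j => nu1 J (X1 t) (X2 t) j * len J (X1 t) (X2 t) j)
        + ip3 var J (X1 t) (Xt2 t) chi
            (fun j => nu2 J (X1 t) (X2 t) j * len J (X1 t) (X2 t) j)
        = ip3 var J (X1 t) (kappa t) chi (len J (X1 t) (X2 t))) ->
     (forall t, 0 < t <= T -> forall eta1 eta2, inVD per J b0 b1 eta1 eta2 ->
        ip3 var J (X1 t) (kappa t) eta1
            (fun j => nu1 J (X1 t) (X2 t) j * len J (X1 t) (X2 t) j)
        + ip3 var J (X1 t) (kappa t) eta2
            (fun j => nu2 J (X1 t) (X2 t) j * len J (X1 t) (X2 t) j)
        + ip3 exact J eta1 one one (len J (X1 t) (X2 t))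
        + (ip3 exact J (X1 t) one one
             (fun j => drho J (X1 t) j * drho J eta1 j / len J (X1 t) (X2 t) j)
           + ip3 exact J (X1 t) one one
             (fun j => drho J (X2 t) j * drho J eta2 j / len J (X1 t) (X2 t) j))
        = - (bsum per J b0 b1 r0 r1 P1 (fun r j => r * X1 t j * eta2 j)
             + bsum per J b0 b1 r0 r1 P2 (fun r j => r * X1 t j * eta1 j))) ->
     forall t, 0 < t <= T ->
       derive_within 0 T (fun s => energy per J b0 b1 r0 r1 (X1 s) (X2 s)) t
         (- (2 * PI) * ip3 var J (X1 t) (kappa t) (kappa t) (len J (X1 t) (X2 t)))
       /\ ip3 var J (X1 t) (kappa t) (kappa t) (len J (X1 t) (X2 t)) >= 0)
  /\
  (* (ii) *)
  (forall kappa1 kappa2 : R -> nodefun,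
     (forall t, 0 < t <= T ->
        inWs var per J b0 b1 (kappa1 t) /\ inWs var per J b0 b1 (kappa2 t)) ->
     (forall t, 0 < t <= T -> forall chi1 chi2,
        inWs var per J b0 b1 chi1 -> inWs var per J b0 b1 chi2 ->
        ip3 var J (X1 t) (Xt1 t) chi1 (len J (X1 t) (X2 t))
        + ip3 var J (X1 t) (Xt2 t) chi2 (len J (X1 t) (X2 t))
        = ip3 var J (X1 t) (kappa1 t) chi1 (len J (X1 t) (X2 t))
        + ip3 var J (X1 t) (kappa2 t) chi2 (len J (X1 t) (X2 t))) ->
     (forall t, 0 < t <= T -> forall eta1 eta2, inVD per J b0 b1 eta1 eta2 ->
        ip3 var J (X1 t) (kappa1 t) eta1 (len J (X1 t) (X2 t))
        + ip3 var J (X1 t) (kappa2 t) eta2 (len J (X1 t) (X2 t))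
        + ip3 exact J eta1 one one (len J (X1 t) (X2 t))
        + (ip3 exact J (X1 t) one one
             (fun j => drho J (X1 t) j * drho J eta1 j / len J (X1 t) (X2 t) j)
           + ip3 exact J (X1 t) one one
             (fun j => drho J (X2 t) j * drho J eta2 j / len J (X1 t) (X2 t) j))
        = - (bsum per J b0 b1 r0 r1 P1 (fun r j => r * X1 t j * eta2 j)
             + bsum per J b0 b1 r0 r1 P2 (fun r j => r * X1 t j * eta1 j))) ->
     forall t, 0 < t <= T ->
       derive_within 0 T (fun s => energy per J b0 b1 r0 r1 (X1 s) (X2 s)) t
         (- (2 * PI) * (ip3 var J (X1 t) (kappa1 t) (kappa1 t) (len J (X1 t) (X2 t))
                       + ip3 var J (X1 t) (kappa2 t) (kappa2 t) (len J (X1 t) (X2 t))))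
       /\ ip3 var J (X1 t) (kappa1 t) (kappa1 t) (len J (X1 t) (X2 t))
          + ip3 var J (X1 t) (kappa2 t) (kappa2 t) (len J (X1 t) (X2 t)) >= 0).
Proof.
  assert (Hd1 : forall t, 0 <= t <= T -> forall j, (j <= J)%nat ->
     D 0 T (fun s => X1 s j) t (Xt1 t j)).
  { intros t Ht j Hj. apply D_of_dw. apply (HC1 j t Hj Ht). }
  assert (Hd2 : forall t, 0 <= t <= T -> forall j, (j <= J)%nat ->
     D 0 T (fun s => X2 s j) t (Xt2 t j)).
  { intros t Ht j Hj. apply D_of_dw. apply (HC1 j t Hj Ht). }
  assert (Hnn : forall t, 0 <= t <= T -> forall j, (j <= J)%nat -> 0 <= X1 t j).
  { intros t Ht. apply X1_nonneg with per b0 b1 (X2 t); auto.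
    all: intros j rho Hj; apply Hpos; auto. }
  assert (HE : forall t, 0 < t <= T ->
    D 0 T (fun s => energy per J b0 b1 r0 r1 (X1 s) (X2 s)) t
  (2*PI*( (ip3 exact J (Xt1 t) one one (len J (X1 t) (X2 t))
        + (ip3 exact J (X1 t) one one
             (fun j => drho J (X1 t) j * drho J (Xt1 t) j / len J (X1 t) (X2 t) j)
           + ip3 exact J (X1 t) one one
             (fun j => drho J (X2 t) j * drho J (Xt2 t) j / len J (X1 t) (X2 t) j)))
        + (bsum per J b0 b1 r0 r1 P1 (fun r j => r * X1 t j * Xt2 t j)
           + bsum per J b0 b1 r0 r1 P2 (fun r j => r * X1 t j * Xt1 t j))))).
  { intros t Ht. apply D_energy.
    - apply Hd1; lra.
    - apply Hd2; lra.
    - intros j Hj. apply Hlen; auto; lra.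
    - destruct (HXt t Ht) as [_ [HP1 _]]. exact HP1. }
  split.
  - intros kappa Hk Heq1 Heq2 t Ht. split.
    + apply dw_of_D. eapply D_eql; [apply HE; auto|].
      specialize (Heq2 t Ht (Xt1 t) (Xt2 t) (HXt t Ht)).
      specialize (Heq1 t Ht (kappa t) (Hk t Ht)).
      rewrite (ip3_sym var J (X1 t) (Xt1 t)), (ip3_sym var J (X1 t) (Xt2 t)) in Heq1.
      match goal with |- 2 * PI * ?Y = _ =>
        replace Y with (- ip3 var J (X1 t) (kappa t) (kappa t) (len J (X1 t) (X2 t))) by lra
      end. ring.
    + apply Rle_ge, ip3_nonneg; auto.
      * intros j Hj; apply Hnn; auto; lra.
      * intros j Hj; apply Hlen; auto; lra.
  - intros kappa1 kappa2 Hk Heq1 Heq2 t Ht. split.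
    + apply dw_of_D. eapply D_eql; [apply HE; auto|].
      specialize (Heq2 t Ht (Xt1 t) (Xt2 t) (HXt t Ht)).
      destruct (Hk t Ht) as [Hk1 Hk2].
      specialize (Heq1 t Ht (kappa1 t) (kappa2 t) Hk1 Hk2).
      rewrite (ip3_sym var J (X1 t) (Xt1 t)), (ip3_sym var J (X1 t) (Xt2 t)) in Heq1.
      match goal with |- 2 * PI * ?Y = _ =>
        replace Y with (- (ip3 var J (X1 t) (kappa1 t) (kappa1 t) (len J (X1 t) (X2 t))
             + ip3 var J (X1 t) (kappa2 t) (kappa2 t) (len J (X1 t) (X2 t)))) by lra
      end. ring.
    + apply Rle_ge, Rplus_le_le_0_compat; apply ip3_nonneg; auto;
        intros j Hj; [apply Hnn|apply Hlen|apply Hnn|apply Hlen]; auto; lra.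
Qed.
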